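(* Both $IIS$ and head spine $SII$ absorb call-by-name $III$: for every term $M$, $IIS(III(M)) = IIS(M)$ and $SII(III(M))=SII(M)$ (equality of partial functions: either both sides are undefined or both are defined and equal).
   Context: Terms: $\Lambda ::= x\mid\lambda x.\Lambda\mid\Lambda\Lambda$; $[N/x]B$ is capture-avoiding substitution. An evaluator is a partial function $\Lambda\rightharpoonup\Lambda$ defined by inference rules, undefined (divergent) where no finite derivation exists; $\mathrm{id}$ is the identity; composition $e_2\circ e_1$ is undefined where $e_1$ is. Eval-apply template: given evaluators $la,op_1,ar_1,op_2,ar_2$ (possibly $ea$ itself), $ea$ is defined by (var) $ea(x)=x$; (abs) $ea(\lambda x.B)=\lambda x.B'$ if $la(B)=B'$; (con) $ea(MN)=B'$ if $op_1(M)=\lambda x.B$, $ar_1(N)=N'$, $ea([N'/x]B)=B'$; (neu) $ea(MN)=M''N'$ if $op_1(M)=M'$, $M'$ not an abstraction, $op_2(M')=M''$, $ar_2(N)=N'$. Uniform evaluator $XYZ\in\{I,S\}^3$: $op_1=ea$, $op_2=\mathrm{id}$, and $la$, $ar_1$, $ar_2$ equal to $ea$ itself when the corresponding letter $X$, $Y$, $Z$ is $S$ and to $\mathrm{id}$ when it is $I$. Thus $III$ is call-by-name and $SII$ is head spine. A strategy $st_2$ absorbs $st_1$ iff $st_2\circ st_1=st_2$. *)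

(* Defs.v *)
From Stdlib Require Import Arith.

Inductive term : Type :=
| Var : nat -> term
| Lam : term -> term
| App : term -> term -> term.

Fixpoint lift (c : nat) (t : term) : term :=
  match t with
  | Var n => if n <? c then Var n else Var (S n)
  | Lam b => Lam (lift (S c) b)
  | App a b => App (lift c a) (lift c b)
  end.

Fixpoint subst_at (k : nat) (N : term) (t : term) : term :=
  match t with
  | Var n => if n <? k then Var n
             else if n =? k then Nat.iter k (lift 0) N
             else Var (pred n)
  | Lam b => Lam (subst_at (S k) N b)
  | App a b => App (subst_at k N a) (subst_at k N b)
  end.

(* [N/x]B where B is the body of \x.B : capture-avoiding substitution *)
Definition subst (B N : term) : term := subst_at 0 N B.

Definition is_abs (t : term) : Prop :=
  match t with Lam _ => True | _ => False end.

(* Uniform evaluator XYZ, with X,Y,Z in {I,S} encoded as bools (true = S):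
   la = ea if X else id, ar1 = ea if Y else id, ar2 = ea if Z else id,
   op1 = ea, op2 = id.  [ev X Y Z M N] means ea(M) = N (big-step relation;
   the evaluator is undefined where no finite derivation exists). *)
Inductive ev (X Y Z : bool) : term -> term -> Prop :=
| ev_var : forall n, ev X Y Z (Var n) (Var n)
| ev_abs_S : forall B B', X = true -> ev X Y Z B B' -> ev X Y Z (Lam B) (Lam B')
| ev_abs_I : forall B, X = false -> ev X Y Z (Lam B) (Lam B)
| ev_con_S : forall M N B N' B', Y = true ->
    ev X Y Z M (Lam B) -> ev X Y Z N N' -> ev X Y Z (subst B N') B' ->
    ev X Y Z (App M N) B'
| ev_con_I : forall M N B B', Y = false ->
    ev X Y Z M (Lam B) -> ev X Y Z (subst B N) B' ->
    ev X Y Z (App M N) B'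
| ev_neu_S : forall M N M' N', Z = true ->
    ev X Y Z M M' -> ~ is_abs M' -> ev X Y Z N N' ->
    ev X Y Z (App M N) (App M' N')
| ev_neu_I : forall M N M', Z = false ->
    ev X Y Z M M' -> ~ is_abs M' ->
    ev X Y Z (App M N) (App M' N).

Definition III := ev false false false.
Definition IIS := ev false false true.
Definition SII := ev true false false.

Definition absorbs (st2 st1 : term -> term -> Prop) : Prop :=
  forall M R, (exists M', st1 M M' /\ st2 M' R) <-> st2 M R.

(* Main.v *)
Require Import Defs.
From Stdlib Require Import Arith Lia.

Lemma IIS_fwd : forall M M', III M M' -> forall R, IIS M' R -> IIS M R.
Proof.
  unfold III, IIS. intros M M' H; induction H; intros R HR; try discriminate.
  - exact HR.
  - exact HR.
  - eapply ev_con_I; [reflexivity| |].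
    + apply IHev1. apply ev_abs_I. reflexivity.
    + apply IHev2. exact HR.
  - inversion HR; subst; try discriminate.
    + eapply ev_con_I; [reflexivity| apply IHev; eassumption | eassumption].
    + eapply ev_neu_S; [reflexivity | apply IHev; eassumption | assumption | assumption].
Qed.

Lemma III_IIS_lam : forall x y, III x y -> forall B, IIS y (Lam B) -> y = Lam B.
Proof.
  unfold III, IIS. intros x y H; induction H; intros B0 HB; try discriminate.
  - inversion HB.
  - inversion HB; subst; try discriminate; reflexivity.
  - apply IHev2; assumption.
  - inversion HB; subst; try discriminate.
    match goal with Hl : ev _ _ _ M' (Lam _) |- _ => apply IHev in Hl end.
    subst. simpl in H1. contradiction.
Qed.

Lemma IIS_bwd : forall M R, IIS M R -> exists M', III M M' /\ IIS M' R.
Proof.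
  unfold III, IIS. intros M R H; induction H; try discriminate.
  - exists (Var n). split; constructor.
  - exists (Lam B). split; apply ev_abs_I; reflexivity.
  - destruct IHev1 as [P1 [G1 G2]].
    pose proof (III_IIS_lam _ _ G1 _ G2) as E. subst P1.
    destruct IHev2 as [M2 [G3 G4]].
    exists M2. split; auto. eapply ev_con_I; eauto.
  - destruct IHev1 as [P1 [G1 G2]].
    exists (App P1 N). split.
    + eapply ev_neu_I; eauto.
      intro Ha. destruct P1; simpl in Ha; try contradiction.
      inversion G2; subst; try discriminate. simpl in H1. contradiction.
    + eapply ev_neu_S; eauto.
Qed.

Lemma absorbs_IIS : absorbs IIS III.
Proof.
  intros M R; split.
  - intros [M' [H1 H2]]. eapply IIS_fwd; eauto.
  - apply IIS_bwd.
Qed.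

Ltac nsolve := repeat (cbn -[Nat.eqb Nat.ltb Nat.iter]; match goal with
  | |- context [?a <? ?b] => destruct (Nat.ltb_spec a b)
  | |- context [?a =? ?b] => destruct (Nat.eqb_spec a b) end);
  cbn -[Nat.eqb Nat.ltb Nat.iter]; try (exfalso; lia); try reflexivity; try (f_equal; lia).

Lemma lift_lift : forall t i c, i <= c -> lift (S c) (lift i t) = lift i (lift c t).
Proof.
  induction t; intros i c Hic; simpl.
  - nsolve.
  - f_equal. apply IHt. lia.
  - f_equal; auto.
Qed.

Lemma lift_iter : forall k c N, c <= k ->
  lift c (Nat.iter k (lift 0) N) = Nat.iter (S k) (lift 0) N.
Proof.
  induction k; intros c N Hc.
  - assert (c = 0) by lia. subst. reflexivity.
  - destruct c.
    + reflexivity.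
    + change (Nat.iter (S k) (lift 0) N) with (lift 0 (Nat.iter k (lift 0) N)).
      rewrite lift_lift by lia. rewrite IHk by lia. reflexivity.
Qed.

Lemma subst_lift_same : forall t j X, subst_at j X (lift j t) = t.
Proof.
  induction t; intros j X; simpl.
  - nsolve.
  - f_equal. apply IHt.
  - f_equal; auto.
Qed.

Lemma subst_lift_comm : forall t c k N, c <= k ->
  subst_at (S k) N (lift c t) = lift c (subst_at k N t).
Proof.
  induction t; intros c k N Hc; simpl.
  - destruct (Nat.ltb_spec n c).
    + nsolve.
    + simpl. destruct (Nat.ltb_spec n k).
      * nsolve.
      * destruct (Nat.eqb_spec n k).
        -- subst. nsolve.
           symmetry. apply lift_iter. lia.
        -- nsolve.
  - f_equal. apply IHt. lia.
  - f_equal; auto.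
Qed.

Lemma subst_iter : forall j k N M,
  subst_at (j+k) N (Nat.iter j (lift 0) M) = Nat.iter j (lift 0) (subst_at k N M).
Proof.
  induction j; intros k N M.
  - reflexivity.
  - change (Nat.iter (S j) (lift 0) M) with (lift 0 (Nat.iter j (lift 0) M)).
    simpl Nat.add. rewrite subst_lift_comm by lia. rewrite IHj. reflexivity.
Qed.

Lemma subst_subst : forall B j k N M,
  subst_at (j+k) N (subst_at j M B) = subst_at j (subst_at k N M) (subst_at (S (j+k)) N B).
Proof.
  induction B; intros j k N M; simpl.
  - destruct (Nat.ltb_spec n j).
    + nsolve.
    + destruct (Nat.eqb_spec n j).
      * subst. destruct (Nat.ltb_spec j (S (j+k))); [|lia]. simpl.
        rewrite Nat.ltb_irrefl, Nat.eqb_refl. apply subst_iter.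
      * destruct (Nat.ltb_spec n (S (j+k))).
        -- nsolve.
        -- destruct (Nat.eqb_spec n (S (j+k))).
           ++ subst. nsolve. change (lift 0 (Nat.iter (j + k) (lift 0) N)) with (Nat.iter (S (j+k)) (lift 0) N).
              rewrite <- (lift_iter (j+k) j N) by lia.
              rewrite subst_lift_same. reflexivity.
           ++ nsolve.
  - f_equal. apply (IHB (S j)).
  - f_equal; auto.
Qed.

Inductive hr : term -> term -> Prop :=
| hr_beta : forall B N, hr (App (Lam B) N) (subst B N)
| hr_app : forall P P' N, hr P P' -> ~ is_abs P -> hr (App P N) (App P' N)
| hr_lam : forall B B', hr B B' -> hr (Lam B) (Lam B').

Inductive wh : term -> term -> Prop :=
| wh_beta : forall B N, wh (App (Lam B) N) (subst B N)
| wh_app : forall P P' N, wh P P' -> ~ is_abs P -> wh (App P N) (App P' N).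

Inductive hrn : nat -> term -> term -> Prop :=
| hrn0 : forall M, hrn 0 M M
| hrnS : forall n M M1 M2, hr M M1 -> hrn n M1 M2 -> hrn (S n) M M2.

Inductive whn : nat -> term -> term -> Prop :=
| whn0 : forall M, whn 0 M M
| whnS : forall n M M1 M2, wh M M1 -> whn n M1 M2 -> whn (S n) M M2.

Definition hnf M := forall X, ~ hr M X.
Definition whnf M := forall X, ~ wh M X.

Lemma hr_det : forall M X, hr M X -> forall Y, hr M Y -> X = Y.
Proof.
  intros M X H; induction H; intros Y HY; inversion HY; subst; auto.
  - simpl in H3. contradiction.
  - simpl in H0. contradiction.
  - f_equal. auto.
  - f_equal. auto.
Qed.

Lemma wh_hr : forall M X, wh M X -> hr M X.
Proof. intros M X H; induction H; constructor; auto. Qed.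

Lemma hr_dec : forall M, hnf M \/ exists M1, hr M M1.
Proof.
  induction M.
  - left. intros X H; inversion H.
  - destruct IHM as [H | [M1 H]].
    + left. intros X HX; inversion HX; subst. eapply H; eauto.
    + right. eexists; constructor; eauto.
  - destruct M1.
    + destruct IHM1 as [H | [M1 H]].
      * left. intros X HX; inversion HX; subst. eapply H; eauto.
      * right. eexists; apply hr_app; eauto.
    + right. eexists; apply hr_beta.
    + destruct IHM1 as [H | [M3 H]].
      * left. intros X HX; inversion HX; subst. eapply H; eauto.
      * right. eexists; apply hr_app; eauto; simpl; auto.
Qed.

Lemma wh_dec : forall M, whnf M \/ exists M1, wh M M1.
Proof.
  induction M.
  - left. intros X H; inversion H.
  - left. intros X H; inversion H.
  - destruct M1.
    + destruct IHM1 as [H | [M1 H]].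
      * left. intros X HX; inversion HX; subst. eapply H; eauto.
      * right. eexists; apply wh_app; eauto.
    + right. eexists; apply wh_beta.
    + destruct IHM1 as [H | [M3 H]].
      * left. intros X HX; inversion HX; subst. eapply H; eauto.
      * right. eexists; apply wh_app; eauto; simpl; auto.
Qed.

Lemma not_abs_subst : forall P P' k N, hr P P' -> ~ is_abs P -> ~ is_abs (subst_at k N P).
Proof.
  intros P P' k N H Ha. destruct P; simpl.
  - inversion H.
  - simpl in Ha. exfalso; auto.
  - auto.
Qed.

Lemma hr_subst : forall B B', hr B B' -> forall k N, hr (subst_at k N B) (subst_at k N B').
Proof.
  intros B B' H; induction H; intros k N0; simpl.
  - unfold subst. pose proof (subst_subst B 0 k N0 N) as E. simpl in E. rewrite E.
    apply hr_beta.
  - apply hr_app; auto. eapply not_abs_subst; eauto.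
  - apply hr_lam; auto.
Qed.

Lemma hrn_trans : forall a X Y, hrn a X Y -> forall b Z, hrn b Y Z -> hrn (a + b) X Z.
Proof. intros a X Y H; induction H; intros b Z HZ; simpl; auto. econstructor; eauto. Qed.

Lemma hrn_lam : forall n C D, hrn n C D -> hrn n (Lam C) (Lam D).
Proof. intros n C D H; induction H; econstructor; eauto. constructor; auto. Qed.

Lemma hrn_subst : forall n B B', hrn n B B' -> forall k N, hrn n (subst_at k N B) (subst_at k N B').
Proof. intros n B B' H; induction H; intros k N; econstructor; eauto. apply hr_subst; auto. Qed.

Lemma whn_hrn : forall n M M', whn n M M' -> hrn n M M'.
Proof. intros n M M' H; induction H; econstructor; eauto. apply wh_hr; auto. Qed.

Lemma whn_trans : forall a X Y, whn a X Y -> forall b Z, whn b Y Z -> whn (a + b) X Z.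
Proof. intros a X Y H; induction H; intros b Z HZ; simpl; auto. econstructor; eauto. Qed.

Lemma wh_not_abs : forall M X, wh M X -> ~ is_abs M.
Proof. intros M X H; inversion H; simpl; auto. Qed.

Lemma whn_app : forall n P P' Q, whn n P P' -> whn n (App P Q) (App P' Q).
Proof.
  intros n P P' Q H; induction H; econstructor; eauto.
  apply wh_app; auto. eapply wh_not_abs; eauto.
Qed.

Lemma hrn_lam_inv : forall n C X, hrn n (Lam C) X -> exists D, X = Lam D /\ hrn n C D.
Proof.
  induction n; intros C X H; inversion H; subst.
  - eexists; split; eauto. constructor.
  - inversion H1; subst. destruct (IHn _ _ H2) as [D [E HD]].
    exists D; split; auto. econstructor; eauto.
Qed.

Lemma hrn_app_cong : forall n P P' Q, hrn n P P' -> ~ is_abs P' -> hrn n (App P Q) (App P' Q).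
Proof.
  intros n P P' Q H; induction H; intros Ha.
  - constructor.
  - destruct M.
    + econstructor; [apply hr_app; eauto | auto].
    + exfalso. assert (Hn : hrn (S n) (Lam M) M2) by (econstructor; eauto).
      destruct (hrn_lam_inv _ _ _ Hn) as [D [E _]]. subst. simpl in Ha; auto.
    + econstructor; [apply hr_app; eauto; simpl; auto | auto].
Qed.

Lemma hrn_to_lam : forall n P B, hrn n P (Lam B) -> forall Q,
  exists a b B0, hrn a (App P Q) (subst B0 Q) /\ hrn b B0 B.
Proof.
  intros n P B H. remember (Lam B) as L. revert B HeqL.
  induction H; intros B0 HL Q; subst.
  - exists 1, 0, B0. split; econstructor; [apply hr_beta | constructor].
  - destruct M.
    + exfalso. inversion H.
    + exists 1, (S n), M. split.
      * econstructor; [apply hr_beta | constructor].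
      * assert (Hn : hrn (S n) (Lam M) (Lam B0)) by (econstructor; eauto).
        destruct (hrn_lam_inv _ _ _ Hn) as [D [E HD]]. inversion E; subst; auto.
    + destruct (IHhrn B0 eq_refl Q) as [a [b [B1 [H1 H2]]]].
      exists (S a), b, B1. split; auto. econstructor; eauto. apply hr_app; simpl; auto.
Qed.

Definition SII' := ev true false false.

Lemma SII_hrn : forall M R, SII M R -> exists n, hrn n M R /\ hnf R.
Proof.
  unfold SII. intros M R H; induction H; try discriminate.
  - exists 0. split; [constructor|]. intros X HX; inversion HX.
  - destruct IHev as [n [K1 K2]]. exists n. split.
    + apply hrn_lam; auto.
    + intros X HX; inversion HX; subst. eapply K2; eauto.
  - destruct IHev1 as [n1 [K1 _]]. destruct IHev2 as [n2 [K2 K3]].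
    destruct (hrn_to_lam _ _ _ K1 N) as [a [b [B0 [G1 G2]]]].
    exists (a + (b + n2)). split; auto.
    eapply hrn_trans; eauto. eapply hrn_trans; eauto.
    apply hrn_subst; auto.
  - destruct IHev as [n [K2 K3]]. exists n. split.
    + apply hrn_app_cong; auto.
    + intros X HX; inversion HX; subst.
      * match goal with Hn : ~ is_abs (Lam _) |- _ => simpl in Hn; auto end.
      * eapply K3; eauto.
Qed.

Lemma hrn_det_prefix : forall a M X, hrn a M X -> forall b Y, hrn b M Y -> b <= a -> hrn (a - b) Y X.
Proof.
  intros a M X H; induction H; intros b Y HY Hb.
  - assert (b = 0) by lia. subst. inversion HY; subst. constructor.
  - inversion HY; subst.
    + simpl. econstructor; eauto.
    + simpl. pose proof (hr_det _ _ H _ H1). subst. apply IHhrn; auto. lia.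
Qed.

Lemma subst_hnf : forall n B k N R, hrn n (subst_at k N B) R -> hnf R ->
  exists j B', j <= n /\ hrn j B B' /\ hnf B'.
Proof.
  induction n; intros B k N R H Hh; destruct (hr_dec B) as [Hb | [B1 HB1]].
  - exists 0, B. repeat split; auto. constructor.
  - exfalso. inversion H; subst. eapply Hh. apply hr_subst; eauto.
  - exists 0, B. repeat split; auto. lia. constructor.
  - inversion H; subst. pose proof (hr_subst _ _ HB1 k N) as E.
    pose proof (hr_det _ _ H1 _ E). subst.
    destruct (IHn _ _ _ _ H2 Hh) as [j [B' [G1 [G2 G3]]]].
    exists (S j), B'. repeat split; auto. lia. econstructor; eauto.
Qed.

Lemma app_decomp : forall n P Q R, hrn n (App P Q) R ->
  (exists P', hrn n P P' /\ R = App P' Q) \/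
  (exists m C, m < n /\ hrn m P (Lam C) /\ hrn (n - S m) (subst C Q) R).
Proof.
  induction n; intros P Q R H; inversion H; subst.
  - left. exists P. split; auto. constructor.
  - inversion H1; subst.
    + right. exists 0, B. repeat split; auto. lia. constructor.
      simpl. rewrite Nat.sub_0_r. auto.
    + destruct (IHn _ _ _ H2) as [[P'' [G1 G2]] | [m [C [G1 [G2 G3]]]]].
      * left. exists P''. split; auto. econstructor; eauto.
      * right. exists (S m), C. repeat split; auto. lia. econstructor; eauto.
Qed.

Lemma hrn_SII : forall n M R, hrn n M R -> hnf R -> SII M R.
Proof.
  unfold SII.
  induction n as [n IHn] using lt_wf_ind. intro M. induction M; intros R H Hh.
  - inversion H; subst.
    + constructor.
    + inversion H0.
  - destruct (hrn_lam_inv _ _ _ H) as [D [E HD]]. subst.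
    apply ev_abs_S; auto. apply IHM; auto. intros X HX. eapply Hh. apply hr_lam; eauto.
  - destruct (app_decomp _ _ _ _ H) as [[P' [G1 G2]] | [m [C [G1 [G2 G3]]]]].
    + subst. eapply ev_neu_I; auto.
      * apply IHM1; auto. intros X HX. eapply Hh. apply hr_app; eauto.
        intro Ha. destruct P'; simpl in Ha; try contradiction. eapply Hh; apply hr_beta.
      * intro Ha. destruct P'; simpl in Ha; try contradiction. eapply Hh; apply hr_beta.
    + destruct (subst_hnf _ _ _ _ _ G3 Hh) as [j [C' [K1 [K2 K3]]]].
      assert (Hl : hrn (m + j) M1 (Lam C')).
      { eapply hrn_trans; eauto. apply hrn_lam; auto. }
      assert (HlC : hnf (Lam C')).
      { intros X HX; inversion HX; subst. eapply K3; eauto. }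
      eapply ev_con_I with (B := C'); auto.
      * apply (IHn (m + j)); auto. lia.
      * pose proof (hrn_subst _ _ _ K2 0 M2) as K4.
        pose proof (hrn_det_prefix _ _ _ G3 _ _ K4 K1) as K5.
        apply (IHn (n - S m - j)); auto. lia.
Qed.

Lemma III_back : forall M M1, wh M M1 -> forall R, III M1 R -> III M R.
Proof.
  unfold III. intros M M1 H; induction H; intros R HR.
  - eapply ev_con_I; eauto. apply ev_abs_I; auto.
  - inversion HR; subst; try discriminate.
    + eapply ev_con_I; eauto.
    + eapply ev_neu_I; eauto.
Qed.

Lemma whnf_III : forall M, whnf M -> III M M.
Proof.
  unfold III. induction M; intros H.
  - constructor.
  - apply ev_abs_I; auto.
  - assert (~ is_abs M1).
    { intro Ha. destruct M1; simpl in Ha; try contradiction. eapply H; apply wh_beta. }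
    eapply ev_neu_I; auto. apply IHM1. intros X HX. eapply H. apply wh_app; eauto.
Qed.

Lemma III_whn : forall M M', III M M' -> exists k, whn k M M'.
Proof.
  unfold III. intros M M' H; induction H; try discriminate.
  - exists 0; constructor.
  - exists 0; constructor.
  - destruct IHev1 as [a Ha]. destruct IHev2 as [b Hb].
    exists (a + S b). eapply whn_trans. apply whn_app; eauto.
    econstructor; eauto. apply wh_beta.
  - destruct IHev as [a Ha]. exists a. apply whn_app; auto.
Qed.

Lemma SII_bwd_aux : forall n M R, hrn n M R -> hnf R -> exists M' m, III M M' /\ hrn m M' R.
Proof.
  induction n; intros M R H Hh; destruct (wh_dec M) as [Hw | [M1 HM1]].
  - exists M, 0. split; auto. apply whnf_III; auto.
  - exfalso. inversion H; subst. eapply Hh. apply wh_hr; eauto.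
  - exists M, (S n). split; auto. apply whnf_III; auto.
  - inversion H; subst. pose proof (hr_det _ _ H1 _ (wh_hr _ _ HM1)). subst.
    destruct (IHn _ _ H2 Hh) as [M' [m [G1 G2]]].
    exists M', m. split; auto. eapply III_back; eauto.
Qed.

Lemma absorbs_SII : absorbs SII III.
Proof.
  intros M R; split.
  - intros [M' [H1 H2]].
    destruct (III_whn _ _ H1) as [k Hk].
    destruct (SII_hrn _ _ H2) as [a [Ha Hh]].
    eapply hrn_SII; eauto. eapply hrn_trans; eauto. apply whn_hrn; eauto.
  - intros H. destruct (SII_hrn _ _ H) as [n [Hn Hh]].
    destruct (SII_bwd_aux _ _ _ Hn Hh) as [M' [m [G1 G2]]].
    exists M'. split; auto. eapply hrn_SII; eauto.
Qed.

Theorem mainTheorem3 : absorbs IIS III /\ absorbs SII III.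
Proof. split; [apply absorbs_IIS | apply absorbs_SII]. Qed.
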